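(* Let $(A,\circ,-)$ be a minus-algebra, let $a,b\in A$ with $a\not\le b$, and let $F$ be a maximally $(a,b)$-separating filter of $(A,\circ)$. Then $F$ is prime: whenever $x\in F$ and $y\in A$, either $y\in F$ or $x-y\in F$.
   Context: A minus-algebra $(A,\circ,-)$ satisfies: $x\circ y=y-(y-x)$; $(A,\circ)$ is a right normal band (semigroup with $x\circ x=x$, $(x\circ y)\circ z=(y\circ x)\circ z$); there is an element $0$ with $x-x=0$ for all $x$; $x\circ0=0\circ x=0$; $(x-y)\circ x=x-y$; $(x-y)\circ y=0$; $(x-y)\circ z=(x\circ z)-y$; and $s-x=t-x\ \&\ x\circ s=x\circ t\Rightarrow s=t$. On $(A,\circ)$: $f\lesssim g$ iff $g\circ f=f$; $f\le g$ iff $f=f\circ g$. A filter is a non-empty $F\subseteq A$ closed under $\circ$ with $a\in F$, $a\lesssim b\Rightarrow b\in F$. For $a\not\le b$, a filter $F$ is $(a,b)$-separating if $a\in F$ and there is no $e\in F$ with $e\circ a=e\circ b$; it is maximally $(a,b)$-separating if it is maximal under inclusion among $(a,b)$-separating filters. *)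

(* Defs.v *)
Record MinusAlgebra := {
  carrier :> Type;
  comp : carrier -> carrier -> carrier;
  minus : carrier -> carrier -> carrier;
  zero : carrier;
  comp_def : forall x y, comp x y = minus y (minus y x);
  comp_assoc : forall x y z, comp (comp x y) z = comp x (comp y z);
  comp_idem : forall x, comp x x = x;
  comp_rnormal : forall x y z, comp (comp x y) z = comp (comp y x) z;
  minus_self : forall x, minus x x = zero;
  comp_zero_r : forall x, comp x zero = zero;
  comp_zero_l : forall x, comp zero x = zero;
  ax_minus_comp_l : forall x y, comp (minus x y) x = minus x y;
  ax_minus_comp_r : forall x y, comp (minus x y) y = zero;
  ax_minus_comp_z : forall x y z, comp (minus x y) z = minus (comp x z) y;
  ax_cancel : forall s t x,
      minus s x = minus t x -> comp x s = comp x t -> s = t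
}.

Section Defs.
Variable A : MinusAlgebra.

Definition lesssim (f g : A) : Prop := comp A g f = f.
Definition leA (f g : A) : Prop := f = comp A f g.

Definition is_filter (F : A -> Prop) : Prop :=
  (exists x, F x) /\
  (forall x y, F x -> F y -> F (comp A x y)) /\
  (forall x y, F x -> lesssim x y -> F y).

Definition separating (a b : A) (F : A -> Prop) : Prop :=
  is_filter F /\ F a /\ ~ (exists e, F e /\ comp A e a = comp A e b).

Definition max_separating (a b : A) (F : A -> Prop) : Prop :=
  separating a b F /\
  forall G : A -> Prop, separating a b G -> (forall x, F x -> G x) ->
    forall x, G x -> F x.

End Defs.

(* Main.v *)
Require Import Defs.
From Stdlib Require Import Classical.

Section S.
Variable A : MinusAlgebra.

Lemma swap (u v w : A) : comp A u (comp A v w) = comp A v (comp A u w).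
Proof. rewrite <- !comp_assoc. exact (comp_rnormal A u v w). Qed.

Lemma gen_step (a b : A) (F : A -> Prop) (z : A) :
  max_separating A a b F -> ~ F z ->
  exists f, F f /\ comp A f (comp A z a) = comp A f (comp A z b).
Proof.
  intros [[HF [Fa Hns]] Hmax] Nz.
  destruct HF as [_ [Fc Fu]].
  set (G := fun g => exists f, F f /\ lesssim A (comp A f z) g).
  assert (FG : forall g, F g -> G g).
  { intros g Fg. exists g. split; auto. unfold lesssim.
    rewrite <- comp_assoc, comp_idem. reflexivity. }
  assert (Gz : G z).
  { exists a. split; auto. unfold lesssim. rewrite swap, comp_idem. reflexivity. }
  destruct (classic (exists e, G e /\ comp A e a = comp A e b)) as [[e [[f [Ff He]] Eab]]|Hn].
  - exists f. split; auto. unfold lesssim in He.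
    assert (K : forall w, comp A e (comp A f (comp A z w)) = comp A f (comp A z w)).
    { intro w. rewrite <- !comp_assoc. rewrite (comp_assoc A e f z), He. reflexivity. }
    rewrite <- (K a), <- (K b), !(swap e f), !(swap e z), Eab. reflexivity.
  - exfalso. apply Nz.
    apply (Hmax G); auto.
    split; [|split; [apply FG; auto| exact Hn]].
    split; [exists a; apply FG; auto|split].
    + intros g1 g2 [f1 [F1 H1]] [f2 [F2 H2]].
      exists (comp A f1 f2). split; [apply Fc; auto|].
      unfold lesssim in *. rewrite !comp_assoc.
      try rewrite !comp_assoc in H1; try rewrite !comp_assoc in H2.
      rewrite (swap g2 f1), H2, (swap f1 f2), (swap g1 f2), H1, (swap f2 f1).
      reflexivity.
    + intros g h [f [Ff Hg]] Hh. exists f. split; auto.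
      unfold lesssim in *. rewrite <- Hg. rewrite <- comp_assoc, Hh. reflexivity.
Qed.
End S.

Theorem lemma3p11 (A : MinusAlgebra) (a b : A) (F : A -> Prop) :
  ~ leA A a b ->
  max_separating A a b F ->
  forall x y : A, F x -> F y \/ F (minus A x y).
Proof.
  intros _ Hm x y Fx.
  destruct (classic (F y)) as [Fy|Ny]; [left; auto|right].
  destruct (classic (F (minus A x y))) as [Fd|Nd]; [auto|exfalso].
  destruct (gen_step A a b F y Hm Ny) as [f1 [F1 H1]].
  destruct (gen_step A a b F (minus A x y) Hm Nd) as [f2 [F2 H2]].
  destruct Hm as [[[_ [Fc _]] [_ Hns]] _].
  apply Hns. exists (comp A x (comp A f1 f2)). split; [apply Fc; auto|].
  rewrite !comp_assoc.
  apply (ax_cancel A _ _ y).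
  - rewrite <- !ax_minus_comp_z.
    rewrite !(swap _ (minus A x y) f1), !(swap _ (minus A x y) f2), H2. reflexivity.
  - rewrite !(swap _ y x), !(swap _ y f1), !(swap _ y f2), !(swap _ f1 f2), H1.
    reflexivity.
Qed.
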